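(* Let $n\ge2$ and let $\mathcal{H}=\{H_1,\dots,H_n\}$ be a family of graphs. Then $$\dim_l(K_n\circ\mathcal{H})=\sum_{i=1}^n\operatorname{adim}_l(H_i)+\max\{0,|I|-1\},$$ where $I=\{u_i\in V(K_n): H_i\in\mathcal{G}\}$. Furthermore, for a graph $H$: if $H\in\mathcal{G}$ then $\dim_l(K_n\circ H)=n\cdot\operatorname{adim}_l(H)+n-1$, and if $H\notin\mathcal{G}$ then $\dim_l(K_n\circ H)=n\cdot\operatorname{adim}_l(H)$.
   Context: All graphs are finite and simple with at least one vertex; $V(K_n)=\{u_1,\dots,u_n\}$. $d_G$ is shortest-path distance ($+\infty$ between components), $d_{G,2}=\min\{d_G,2\}$; $s$ distinguishes $x,y$ w.r.t. $d$ if $d(s,x)\ne d(s,y)$. $\dim_l(G)$: minimum size of $S\subseteq V(G)$ such that any two adjacent vertices are distinguished w.r.t. $d_G$ by some vertex of $S$. $\operatorname{adim}_l(H)$: minimum size of $S\subseteq V(H)$ such that any two adjacent vertices are distinguished w.r.t. $d_{H,2}$ by some vertex of $S$; minimum such sets are local adjacency bases. $\mathcal{G}$: class of graphs $H$ such that every local adjacency basis $B$ of $H$ satisfies $B\subseteq N_H(v)$ for some $v\in V(H)$. Lexicographic product $G\circ\mathcal{H}$: vertex set $\bigcup_i\{u_i\}\times V(H_i)$, $(u_i,v)\sim(u_j,w)$ iff $u_iu_j\in E(G)$, or $i=j$ and $vw\in E(H_i)$; $G\circ H$ means all $H_i\cong H$. *)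

(* Defs.v *)
From mathcomp Require Import all_boot.
Set Implicit Arguments. Unset Strict Implicit. Unset Printing Implicit Defensive.

Record sgraph := SGraph {
  vT :> finType;
  adj : rel vT;
  adj_sym : symmetric adj;
  adj_irr : irreflexive adj;
  vT_nonempty : 0 < #|vT| }.

Section Dist.
Variables (T : finType) (e : rel T).

Definition has_walk (x y : T) (k : nat) : bool :=
  [exists p : k.-tuple T, path e x p && (last x p == y)].

(* shortest-path distance; None encodes +infinity (different components).
   The minimum length of a walk equals the shortest-path length, and any
   shortest path has length < #|T|. *)
Definition dist (x y : T) : option nat :=
  ohead [seq k <- iota 0 #|T| | has_walk x y k].

Definition dist2 (x y : T) : nat :=
  if dist x y is Some k then minn k 2 else 2.

Definition local_resolving (S : {set T}) : bool :=
  [forall x, forall y, e x y ==> [exists s in S, dist s x != dist s y]].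

Definition local_adj_resolving (S : {set T}) : bool :=
  [forall x, forall y, e x y ==> [exists s in S, dist2 s x != dist2 s y]].

Definition ldim : nat :=
  #|[arg min_(S < [set: T] | local_resolving S) #|S|]|.

Definition ladim : nat :=
  #|[arg min_(S < [set: T] | local_adj_resolving S) #|S|]|.

Definition local_adj_basis (B : {set T}) : bool :=
  local_adj_resolving B && (#|B| == ladim).

Definition nbhd (v : T) : {set T} := [set u | e v u].

End Dist.

Definition inG (H : sgraph) : bool :=
  [forall B : {set H}, local_adj_basis (@adj H) B ==>
     [exists v : H, B \subset nbhd (@adj H) v]].

Definition lexprod (I : finType) (eI : rel I) (H : I -> sgraph)
  : rel {i : I & H i} :=
  fun p q => eI (tag p) (tag q) ||
    ((tag p == tag q) && adj (tagged p) (tagged_as p q)).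

(* adjacency of K_n on 'I_n (vertex u_{i+1} <-> i) *)
Definition Kn_adj (n : nat) : rel 'I_n := fun i j => i != j.
Arguments lexprod {I} eI H p q.

(* Main.v *)
Require Import Defs.
From mathcomp Require Import all_boot zify.
Set Implicit Arguments. Unset Strict Implicit. Unset Printing Implicit Defensive.

Section Generic.
Variables (T : finType) (e : rel T) (eirr : irreflexive e).

Definition d3 x y := if x == y then 0 else if e x y then 1 else 2.

Lemma hw0 x y : has_walk e x y 0 = (x == y).
Proof.
apply/existsP/idP => [[p]|/eqP<-]; last by exists (in_tuple [::]); rewrite /= eqxx.
by rewrite (tuple0 p) /=.
Qed.

Lemma hw1 x y : has_walk e x y 1 = e x y.
Proof.
apply/existsP/idP => [[[s sz]]|exy]; last by exists (in_tuple [:: y]); rewrite /= exy eqxx.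
case: s sz => [|z [|? ?]] //= _ /andP[]; rewrite andbT => exz /eqP <-//.
Qed.

Lemma hw2 x y z : e x z -> e z y -> has_walk e x y 2.
Proof. by move=> exz ezy; apply/existsP; exists (in_tuple [:: z; y]); rewrite /= exz ezy eqxx. Qed.

Lemma dist_some x y k : dist e x y = Some k -> has_walk e x y k.
Proof.
rewrite /dist; set s := [seq _ <- _ | _].
case E: s => [|a s'] //= [<-].
have: a \in s by rewrite E mem_head.
by rewrite mem_filter => /andP[].
Qed.

Lemma dist_eq x y k : k < #|T| -> has_walk e x y k ->
  (forall j, j < k -> ~~ has_walk e x y j) -> dist e x y = Some k.
Proof.
move=> kT hk hlt; rewrite /dist.
have -> : #|T| = k + (#|T| - k) by rewrite subnKC // ltnW.
rewrite iotaD filter_cat add0n.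
have -> : [seq j <- iota 0 k | has_walk e x y j] = [::].
  apply/eqP; rewrite -[_ == _]negbK -has_filter; apply/hasPn => j.
  by rewrite mem_iota => /andP[_ jk]; exact: hlt.
have : 0 < #|T| - k by rewrite subn_gt0.
by case: (#|T| - k) => // m _ /=; rewrite hk.
Qed.

Lemma dist_01 x y : (x == y) || e x y -> dist e x y = Some (d3 x y).
Proof.
rewrite /d3; case: eqP => [<- _|/eqP nxy /= exy].
  by rewrite (@dist_eq x x 0) // ?hw0 //; apply/card_gt0P; exists x.
rewrite exy (@dist_eq x y 1) // ?hw1 //.
  by apply/card_gt1P; exists x, y.
by case=> // _; rewrite hw0.
Qed.

Lemma dist2_d3 x y : dist2 e x y = d3 x y.
Proof.
rewrite /dist2.
case: (boolP ((x == y) || e x y)) => [h|]; first by rewrite dist_01 //= /d3; case: eqP => //; case: (e x y).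
rewrite negb_or => /andP[nxy nexy]; rewrite /d3 (negbTE nxy) (negbTE nexy).
case D: dist => [k|] //; move/dist_some: D.
by case: k => [|[|k]]; rewrite ?hw0 ?hw1 ?(negbTE nxy) ?(negbTE nexy).
Qed.

Lemma dist_d3 (hT : forall x y, x != y -> ~~ e x y -> exists z, e x z && e z y) x y :
  dist e x y = Some (d3 x y).
Proof.
case: (boolP ((x == y) || e x y)) => [h|]; first exact: dist_01.
rewrite negb_or => /andP[nxy nexy]; rewrite /d3 (negbTE nxy) (negbTE nexy).
have [z /andP[exz ezy]] := hT x y nxy nexy.
have zx : z != x by apply/eqP => zx; rewrite zx eirr in exz.
have zy : z != y by apply/eqP => zy; rewrite zy eirr in ezy.
apply: dist_eq; last 1 first.
- by case=> [|[|]] // _; rewrite ?hw0 ?hw1 ?nxy.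
  rewrite -cardsT; apply: (leq_trans _ (subset_leq_card (subsetT [set x; y; z]))).
  by rewrite setUC cardsU1 cards2 !inE negb_or zx zy nxy.
- exact: hw2 exz ezy.
Qed.

Lemma res_setT : local_resolving e [set: T].
Proof.
apply/forallP => x; apply/forallP => y; apply/implyP => exy.
apply/exists_inP; exists x => //.
rewrite (@dist_01 x x) ?eqxx // /d3 eqxx.
apply/eqP => /esym/dist_some; rewrite hw0 => /eqP xy.
by rewrite xy eirr in exy.
Qed.

Lemma adjres_setT : local_adj_resolving e [set: T].
Proof.
apply/forallP => x; apply/forallP => y; apply/implyP => exy.
apply/exists_inP; exists x => //.
have xy : x != y by apply/eqP => xy; rewrite xy eirr in exy.
by rewrite !dist2_d3 /d3 eqxx exy (negbTE xy).
Qed.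

Lemma ldim_le S : local_resolving e S -> ldim e <= #|S|.
Proof. by move=> hS; rewrite /ldim; case: (arg_minnP (fun S : {set T} => #|S|) res_setT) => B _; apply. Qed.

Lemma ldim_ex : exists2 S, local_resolving e S & #|S| = ldim e.
Proof. by rewrite /ldim; case: (arg_minnP (fun S : {set T} => #|S|) res_setT) => B hB _; exists B. Qed.

Lemma ladim_le S : local_adj_resolving e S -> ladim e <= #|S|.
Proof. by move=> hS; rewrite /ladim; case: (arg_minnP (fun S : {set T} => #|S|) adjres_setT) => B _; apply. Qed.

Lemma ladim_ex : exists2 S, local_adj_resolving e S & #|S| = ladim e.
Proof. by rewrite /ladim; case: (arg_minnP (fun S : {set T} => #|S|) adjres_setT) => B hB _; exists B. Qed.

Lemma adjres_mono (A B : {set T}) : A \subset B -> local_adj_resolving e A -> local_adj_resolving e B.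
Proof.
move=> /subsetP AB /forallP h; apply/forallP => x; apply/forallP => y; apply/implyP => exy.
move: (h x) => /forallP /(_ y) /implyP /(_ exy) /exists_inP [s sA ds].
by apply/exists_inP; exists s => //; apply: AB.
Qed.

End Generic.

Definition nb (G : sgraph) (A : {set G}) := [exists v, A \subset nbhd (@adj G) v].

Lemma d3_nb (G : sgraph) (a c : G) : adj a c -> d3 (@adj G) c a = 1.
Proof.
move=> ac; rewrite /d3 adj_sym ac; case: eqP => // ca.
by rewrite ca adj_irr in ac.
Qed.

Lemma d3_nnb (G : sgraph) (a c : G) : ~~ adj a c -> d3 (@adj G) c a != 1.
Proof. by move=> ac; rewrite /d3 adj_sym (negbTE ac); case: (c == a). Qed.

Lemma exists_nonnb (G : sgraph) : exists A : {set G},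
  [&& local_adj_resolving (@adj G) A, ~~ nb A & #|A| == ladim (@adj G) + inG G].
Proof.
case: (boolP (inG G)) => hG.
  have [B hB cB] := ladim_ex (@adj_irr G).
  have /forallP /(_ B) /implyP := hG.
  rewrite /local_adj_basis hB cB eqxx => /(_ isT) /existsP [v /subsetP Bv].
  have vB : v \notin B by apply/negP => /Bv; rewrite inE adj_irr.
  exists (v |: B).
  rewrite cardsU1 vB cB addnC eqxx andbT.
  rewrite (adjres_mono (subsetUr _ _) hB) /=.
  apply/existsP => -[u /subsetP hu].
  have uv : adj u v by move: (hu v); rewrite !inE eqxx => /(_ isT).
  move: hB => /forallP /(_ u) /forallP /(_ v) /implyP /(_ uv) /exists_inP [b bB].
  have ub : adj u b by move: (hu b); rewrite !inE bB orbT => /(_ isT).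
  have vb : adj v b by move: (Bv b bB); rewrite inE.
  by rewrite !dist2_d3 ?d3_nb //; apply: adj_irr.
move: hG; rewrite /inG negb_forall => /existsP [B].
rewrite negb_imply => /andP [/andP [hB /eqP cB] hnb].
by exists B; rewrite hB hnb cB addn0 eqxx.
Qed.

Lemma lower_each (G : sgraph) (A : {set G}) : local_adj_resolving (@adj G) A ->
  ladim (@adj G) + (inG G && ~~ nb A) <= #|A|.
Proof.
move=> hA; have le := ladim_le (@adj_irr G) hA.
case: (boolP (inG G)) => hG /=; last by rewrite addn0.
case: (boolP (nb A)) => hnb /=; first by rewrite addn0.
rewrite addn1 ltn_neqAle le andbT; apply/eqP => eqA.
move: hG => /forallP /(_ A) /implyP; rewrite /local_adj_basis hA eqA eqxx => /(_ isT).
by apply/negP: hnb.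
Qed.

Lemma fin_dchoice (I : finType) (T_ : I -> finType) (P : forall i, pred (T_ i)) :
  (forall i, exists x, P i x) -> exists f : forall i, T_ i, forall i, P i (f i).
Proof. by move=> h; exists (fun i => xchoose (h i)) => i; apply: xchooseP. Qed.

Lemma ladim_exb (G : sgraph) : exists B : {set G},
  local_adj_resolving (@adj G) B && (#|B| == ladim (@adj G)).
Proof. by have [B hB cB] := ladim_ex (@adj_irr G); exists B; rewrite hB cB eqxx. Qed.

Section Prod.
Variables (n : nat) (hn : 1 < n) (H : 'I_n -> sgraph).

Local Notation T := {i : 'I_n & H i}.
Local Notation lex := (lexprod (@Kn_adj n) H).
Local Notation tg := (Tagged (fun i => vT (H i))).

Lemma lex_same i (a b : H i) : lex (tg a) (tg b) = adj a b.
Proof. by rewrite /lexprod /Kn_adj /= eqxx /= tagged_asE. Qed.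

Lemma lex_diff i j (a : H i) (b : H j) : i != j -> lex (tg a) (tg b).
Proof. by move=> ij; rewrite /lexprod /Kn_adj /= ij. Qed.

Lemma lex_irr : irreflexive lex.
Proof. by case=> i a; rewrite lex_same adj_irr. Qed.

Lemma lex_sym : symmetric lex.
Proof.
case=> i a [j b]; case: (eqVneq i j) => [ij|ij].
  by subst j; rewrite !lex_same adj_sym.
by rewrite !lex_diff // eq_sym.
Qed.

Lemma lex_hT (x y : T) : x != y -> ~~ lex x y -> exists z, lex x z && lex z y.
Proof.
case: x y => i a [j b] xy.
case: (eqVneq i j) => [ij|ij]; last by rewrite lex_diff.
subst j => _.
pose k0 : 'I_n := Ordinal (ltnW hn).
pose k1 : 'I_n := Ordinal hn.
pose k := if i == k0 then k1 else k0.
have ik : i != k.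
  by rewrite /k; case: (eqVneq i k0) => [->|//]; apply/eqP => /(congr1 val).
have /card_gt0P [w _] := vT_nonempty (H k).
exists (tg w); rewrite !lex_diff // eq_sym //.
Qed.

Lemma dist_lex (x y : T) : dist lex x y = Some (d3 lex x y).
Proof. exact: (dist_d3 lex_irr lex_hT). Qed.

Lemma d3_same i (c a : H i) : d3 lex (tg c) (tg a) = d3 (@adj (H i)) c a.
Proof.
rewrite /d3 lex_same.
have -> : (tg c == tg a) = (c == a).
  by apply/eqP/eqP => [h|->] //; exact: eq_from_Tagged h.
by [].
Qed.

Lemma d3_diff i j (c : H i) (b : H j) : i != j -> d3 lex (tg c) (tg b) = 1.
Proof.
move=> ij; rewrite /d3 lex_diff //.
case: eqP => // /(congr1 tag) /= eij.
by rewrite eij eqxx in ij.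
Qed.

Lemma dneq (s x y : T) : (dist lex s x != dist lex s y) = (d3 lex s x != d3 lex s y).
Proof. by rewrite !dist_lex (inj_eq (@Some_inj _)). Qed.

Definition sec (S : {set T}) i : {set H i} := [set a | tg a \in S].

Lemma resolving_char S : local_resolving lex S <->
  (forall i, local_adj_resolving (@adj (H i)) (sec S i)) /\
  (forall i j, i != j -> nb (sec S i) -> nb (sec S j) -> False).
Proof.
split.
- move=> /forallP R; split.
  + move=> i; apply/forallP => a; apply/forallP => b; apply/implyP => ab.
    move: (R (tg a)) => /forallP /(_ (tg b)) /implyP.
    rewrite lex_same => /(_ ab) /exists_inP [[k c] cS].
    rewrite dneq; case: (eqVneq k i) => [ki|ki].
      subst k; rewrite !d3_same => neq.
      by apply/exists_inP; exists c; [rewrite inE | rewrite !dist2_d3 //; apply: adj_irr].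
    by rewrite !d3_diff.
  + move=> i j ij /existsP[a /subsetP Sa] /existsP[b /subsetP Sb].
    move: (R (tg a)) => /forallP /(_ (tg b)) /implyP.
    rewrite lex_diff // => /(_ isT) /exists_inP [[k c] cS].
    rewrite dneq; case: (eqVneq k i) => [ki|ki].
      subst k; rewrite d3_same d3_diff // d3_nb ?eqxx //.
      by move: (Sa c); rewrite !inE => /(_ cS).
    case: (eqVneq k j) => [kj|kj].
      subst k; rewrite d3_same d3_diff // d3_nb ?eqxx //.
      by move: (Sb c); rewrite !inE => /(_ cS).
    by rewrite !d3_diff // eqxx.
- move=> [R1 R2]; apply/forallP => -[i a]; apply/forallP => -[j b]; apply/implyP => ab.
  case: (eqVneq i j) => [ij|ij].
    subst j; move: ab; rewrite lex_same => ab.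
    move: (R1 i) => /forallP /(_ a) /forallP /(_ b) /implyP /(_ ab) /exists_inP [c cS].
    rewrite inE in cS; rewrite !dist2_d3.
    by move=> neq; apply/exists_inP; exists (tg c) => //; rewrite dneq !d3_same.
  case: (boolP (nb (sec S i))) => nbi.
    have nbj : ~~ nb (sec S j) by apply/negP => /(R2 i j ij nbi).
    move: nbj; rewrite /nb => /existsPn /(_ b) /subsetPn [c cS cN].
    rewrite inE in cS; rewrite inE in cN.
    apply/exists_inP; exists (tg c) => //.
    by rewrite dneq d3_same d3_diff 1?eq_sym //; exact: d3_nnb.
  move: nbi; rewrite /nb => /existsPn /(_ a) /subsetPn [c cS cN].
  rewrite inE in cS; rewrite inE in cN.
  apply/exists_inP; exists (tg c) => //.
  by rewrite dneq d3_same d3_diff //; exact: d3_nnb.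
Qed.

Lemma card_sec (S : {set T}) : #|S| = \sum_i #|sec S i|.
Proof.
rewrite -sum1_card.
under [RHS]eq_bigr => i _ do rewrite -sum1_card.
rewrite (sig_big_dep (fun i => true) (fun i j => j \in sec S i) (fun i j => 1)) /=.
by apply: eq_bigl => -[i a]; rewrite inE.
Qed.


Lemma sum_bool (I : finType) (b : pred I) : \sum_(i : I) (b i : nat) = #|[set i | b i]|.
Proof.
rewrite -sum1_card [RHS]big_mkcond /=; apply: eq_bigr => i _.
by rewrite inE; case: (b i).
Qed.

Theorem main_eq :
  ldim lex = \sum_(i < n) ladim (@adj (H i)) + (#|[set i : 'I_n | inG (H i)]| - 1).
Proof.
set I := [set i : 'I_n | inG (H i)].
apply/eqP; rewrite eqn_leq; apply/andP; split.
-
  have [Nf hN] := fin_dchoice (fun i => exists_nonnb (H i)).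
  have [Bf hB] := fin_dchoice (fun i => ladim_exb (H i)).
  have [j0 hj0] : exists j0 : 'I_n, (I != set0) ==> (j0 \in I).
    case: (set_0Vmem I) => [->|[j jI]]; last by exists j; rewrite jI implybT.
    by exists (Ordinal (ltnW hn)); rewrite eqxx.
  pose A i := if (i == j0) && inG (H i) then Bf i else Nf i.
  pose S := [set p : T | tagged p \in A (tag p)].
  have secS i : sec S i = A i by apply/setP => a; rewrite !inE.
  have nbA i : nb (A i) -> i == j0.
    rewrite /A; case: ifP => [/andP[]//|_].
    by move: (hN i) => /and3P[_ /negbTE ->].
  have cA i : #|A i| = ladim (@adj (H i)) + (inG (H i) && (i != j0)).
    rewrite /A; case: (eqVneq i j0) => _; case: (inG (H i)) (hN i) (hB i) => /=;
    by move=> /and3P[_ _ /eqP cN] /andP[_ /eqP cB]; rewrite ?cN ?cB ?addn0.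
  apply: leq_trans (ldim_le lex_irr (_ : local_resolving lex S)) _.
    apply/resolving_char; split => [i|i j ij]; rewrite !secS.
      rewrite /A; case: ifP => _.
        by case/andP: (hB i).
      by case/and3P: (hN i).
    by move=> /nbA /eqP ei /nbA /eqP ej; rewrite ei ej eqxx in ij.
  rewrite card_sec; under eq_bigr => i _ do rewrite secS cA.
  rewrite big_split /= leq_add2l sum_bool.
  case: (eqVneq I set0) hj0 => [I0 _|_ /= j0I].
    apply: leq_trans (_ : 0 <= _) => //.
    rewrite leqn0 cards_eq0; apply/eqP/setP => i; rewrite !inE.
    by move/setP: I0 => /(_ i); rewrite !inE => ->.
  rewrite (cardsD1 j0 I) j0I add1n subSS.
  rewrite subn0; apply: eq_leq; apply: eq_card => i; rewrite !inE andbC.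
  by [].
-
  have [S hS cS] := ldim_ex lex_irr.
  rewrite -cS card_sec.
  have [R1 R2] := (resolving_char S).1 hS.
  have hsum : \sum_(i < n) (ladim (@adj (H i)) + (inG (H i) && ~~ nb (sec S i)))
      <= \sum_(i < n) #|sec S i|.
    by apply: leq_sum => i _; apply: lower_each.
  apply: leq_trans hsum.
  rewrite big_split /= leq_add2l sum_bool.
  set J := [set i | _].
  set K := [set i | nb (sec S i)].
  have cK : #|K| <= 1.
    rewrite leqNgt; apply/card_gt1P => -[x [y [xK yK xy]]].
    by rewrite !inE in xK yK; exact: R2 x y xy xK yK.
  rewrite leq_subLR.
  have sI : I \subset J :|: K.
    apply/subsetP => i; rewrite !inE => ->; by case: (nb (sec S i)).
  apply: leq_trans (subset_leq_card sI) _.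
  rewrite -(leq_add2r #|J :&: K|) cardsUI.
  lia.
Qed.

End Prod.

Theorem corollary2 (n : nat) (hn : 2 <= n) (H : 'I_n -> sgraph) :
  ldim (lexprod (@Kn_adj n) H) =
    \sum_(i < n) ladim (@adj (H i)) + (#|[set i : 'I_n | inG (H i)]| - 1)
  /\ (forall G : sgraph,
        (inG G -> ldim (lexprod (@Kn_adj n) (fun _ => G)) =
                    n * ladim (@adj G) + n - 1)
     /\ (~~ inG G -> ldim (lexprod (@Kn_adj n) (fun _ => G)) =
                    n * ladim (@adj G))).
Proof.
split; first exact: main_eq.
move=> G; rewrite (main_eq hn (fun _ => G)) /= sum_nat_const card_ord mulnC.
split => hG.
  have -> : [set _ : 'I_n | inG G] = setT by apply/setP => i; rewrite !inE hG.
  rewrite cardsT card_ord; lia.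
have -> : [set _ : 'I_n | inG G] = set0 by apply/setP => i; rewrite !inE (negbTE hG).
by rewrite cards0 addn0.
Qed.
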